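(* Let $A$ be an infinite set, fix $z\in A$, $A'=A\setminus\{z\}$, and $p\in[1,\infty)$. The map $p_p:N(A)\to l^p(A)$ is continuous.
   Context: $l^p(A)$ is the set of families $x=(x_a)_{a\in A'}$ of real numbers with $x_a=0$ for all but countably many $a$ and $\sum_a|x_a|^p<\infty$, with metric $d_p(x,y)=(\sum_a|x_a-y_a|^p)^{1/p}$. $N(A)$ is the set of all sequences $\alpha=a_1a_2a_3\ldots$ with $a_k\in A$, with metric $d(v,v')=1/k$ where $k$ is the first index at which $v,v'$ differ, and $d(v,v)=0$. The map $p_p$ is $p_p(\alpha)=(\alpha_b)_{b\in A'}$ where, for $\alpha=a_1a_2\ldots$, $\alpha_b=\sum_{k:\,a_k=b}2^{-k}$ (and $\alpha_b=0$ if no $a_k$ equals $b$). *)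

(* Defs.v *)
From HB Require Import structures.
From mathcomp Require Import all_boot all_order all_algebra.
From mathcomp Require Import all_classical all_reals all_analysis.
Set Implicit Arguments. Unset Strict Implicit. Unset Printing Implicit Defensive.
Import Order.TTheory GRing.Theory Num.Theory.
Local Open Scope classical_set_scope.
Local Open Scope ring_scope.

(* Families indexed by A' = A \ {z} are represented as functions A -> R whose
   value at z is irrelevant (all notions below only look at A'). *)
Definition Aprime (A : Type) (z : A) : set A := ~` [set z].

Definition lp_sum (R : realType) (A : choiceType) (z : A) (p : R)
  (x y : A -> R) : \bar R :=
  (\esum_(a in Aprime z) ((`|x a - y a| `^ p)%:E))%E.

Definition in_lp (R : realType) (A : choiceType) (z : A) (p : R)
  (x : A -> R) : Prop :=
  countable [set a | Aprime z a /\ x a != 0] /\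
  (lp_sum z p x (fun=> 0%R) < +oo)%E.

Definition d_p (R : realType) (A : choiceType) (z : A) (p : R)
  (x y : A -> R) : R :=
  (fine (lp_sum z p x y)) `^ p^-1.

(* N(A): sequences a_1 a_2 ... ; a_k is v (k-1) *)
Lemma exists_asbool_diff (A : Type) (v w : nat -> A) :
  (exists n, v n <> w n) -> exists n, `[< v n <> w n >].
Proof. by case=> n H; exists n; apply/asboolP. Qed.

Definition dN (R : realType) (A : Type) (v w : nat -> A) : R :=
  match pselect (exists n, v n <> w n) with
  | left H => ((ex_minn (exists_asbool_diff H)).+1%:R)^-1
  | right _ => 0
  end.

Definition pp_map (R : realType) (A : choiceType) (alpha : nat -> A) (b : A) : R :=
  limn (fun n => \sum_(0 <= k < n | alpha k == b) ((2 : R) ^- k.+1)).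
Arguments pp_map R {A} alpha b.
Arguments dN R {A} v w.

(* Main.v *)
Require Import Defs.
From HB Require Import structures.
From mathcomp Require Import all_boot all_order all_algebra.
From mathcomp Require Import all_classical all_reals all_analysis.
From mathcomp Require Import lra.
Import Order.TTheory GRing.Theory Num.Theory.
Import numFieldNormedType.Exports.
Local Open Scope classical_set_scope.
Local Open Scope ring_scope.

Section Helpers.
Context {R : realType}.
Context {A : choiceType}.

Definition w (k : nat) : R := (2 : R) ^- k.+1.
Definition Sp (alpha : nat -> A) (b : A) (n : nat) : R :=
  \sum_(0 <= k < n | alpha k == b) w k.

Lemma w_ge0 k : 0 <= w k.
Proof. by rewrite /w invr_ge0 exprn_ge0. Qed.

Lemma tail_bound N n :
  \sum_(0 <= k < n) (if (N <= k)%N then w k else 0) <= (2:R) ^- N - (2:R) ^- (maxn n N).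
Proof.
elim: n => [|n IH].
  by rewrite big_nil max0n subrr.
rewrite big_nat_recr //=.
case: (leqP N n) => Nn.
  rewrite (maxn_idPl Nn) in IH; rewrite (maxn_idPl (leqW Nn)).
  apply: le_trans (lerD IH (lexx _)) _.
  rewrite /w -addrA lerD2l exprS invfM.
  have h : 0 < (2:R) ^- n by rewrite invr_gt0 exprn_gt0.
  set x := (2:R) ^- n.
  have -> : (2^-1 / 2 ^+ n : R) = x / 2 by rewrite mulrC.
  lra.
rewrite addr0 (maxn_idPr Nn); rewrite (maxn_idPr (ltnW Nn)) in IH.
by [].
Qed.


Lemma tail_le N n :
  \sum_(0 <= k < n) (if (N <= k)%N then w k else 0) <= (2:R) ^- N.
Proof.
apply: le_trans (tail_bound N n) _.
by rewrite lerBlDr lerDl invr_ge0 exprn_ge0.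
Qed.

Lemma sum_w_le1 n : \sum_(0 <= k < n) w k <= 1.
Proof.
have h := tail_le 0 n; rewrite expr0 invr1 in h.
by apply: le_trans h; apply: ler_sum => k _.
Qed.

Lemma count_bound (s : seq A) (alpha : nat -> A) (c : nat -> R) n :
  uniq s -> (forall k, 0 <= c k) ->
  \sum_(a <- s) \sum_(0 <= k < n | alpha k == a) c k <= \sum_(0 <= k < n) c k.
Proof.
move=> us c0.
under eq_bigr => a _ do rewrite big_mkcond /=.
rewrite exchange_big /=; apply: ler_sum => k _.
rewrite -big_mkcond /=.
under eq_bigl => a do rewrite eq_sym.
rewrite -big_filter.
case: (boolP (alpha k \in s)) => ks.
  have -> : [seq a <- s | a == alpha k] = [:: alpha k].
    by rewrite (filter_pred1_uniq us ks).
  by rewrite big_seq1.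
have -> : [seq a <- s | a == alpha k] = [::].
  apply/eqP; apply/negPn; rewrite -has_filter; apply/hasP => -[a ains /eqP e].
  by move: ks; rewrite -e ains.
by rewrite big_nil.
Qed.

Lemma S_ge0 (alpha : nat -> A) (b : A) n : 0 <= Sp alpha b n.
Proof. by apply: sumr_ge0 => k _; exact: w_ge0. Qed.

Lemma S_le1 (alpha : nat -> A) (b : A) n : Sp alpha b n <= 1.
Proof.
apply: le_trans (sum_w_le1 n).
rewrite /Sp [X in _ <= X](bigID (fun k => alpha k == b)) /= lerDl.
by apply: sumr_ge0 => k _; exact: w_ge0.
Qed.

Lemma S_nondec (alpha : nat -> A) (b : A) : nondecreasing_seq (Sp alpha b).
Proof.
move=> n m nm; rewrite /Sp (big_cat_nat (leq0n n) nm) /= lerDl.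
by apply: sumr_ge0 => k _; exact: w_ge0.
Qed.

Lemma S_cvg (alpha : nat -> A) (b : A) : Sp alpha b n @[n --> \oo] --> pp_map R alpha b.
Proof.
have h := nondecreasing_cvgn (S_nondec alpha b).
have ub : has_ubound (range (Sp alpha b)).
  by exists 1 => _ [n _ <-]; exact: S_le1.
have := h ub; rewrite /pp_map => h'.
by rewrite (cvg_lim (@Rhausdorff R) h').
Qed.

Lemma pp_ge0 (alpha : nat -> A) (b : A) : 0 <= pp_map R alpha b.
Proof.
have := S_cvg alpha b => h; rewrite -(cvg_lim (@Rhausdorff R) h).
apply: limr_ge; first by apply: cvgP h.
by apply: nearW => n; exact: S_ge0.
Qed.

Lemma pp_le1 (alpha : nat -> A) (b : A) : pp_map R alpha b <= 1.
Proof.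
have := S_cvg alpha b => h; rewrite -(cvg_lim (@Rhausdorff R) h).
apply: limr_le; first by apply: cvgP h.
by apply: nearW => n; exact: S_le1.
Qed.

Lemma cvg_seqsum (s : seq A) (g : A -> nat -> R) (l : A -> R) :
  (forall a, g a n @[n --> \oo] --> l a) ->
  \sum_(a <- s) g a n @[n --> \oo] --> \sum_(a <- s) l a.
Proof.
move=> hg; elim: s => [|a s IH].
  rewrite big_nil; under eq_fun do rewrite big_nil; exact: cvg_cst.
rewrite big_cons; under eq_fun do rewrite big_cons.
exact: cvgD.
Qed.

Lemma lim_sum_le (s : seq A) (g : A -> nat -> R) (l : A -> R) (C : R) :
  (forall a, g a n @[n --> \oo] --> l a) ->
  (forall n, \sum_(a <- s) g a n <= C) -> \sum_(a <- s) l a <= C.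
Proof.
move=> hg hC; have h := @cvg_seqsum s g l hg.
rewrite -(cvg_lim (@Rhausdorff R) h); apply: limr_le; first by apply: cvgP h.
by apply: nearW.
Qed.

Lemma esum_le (D : set A) (f : A -> R) (C : R) :
  (forall s : seq A, uniq s -> \sum_(a <- s) f a <= C) ->
  (\esum_(a in D) (f a)%:E <= C%:E)%E.
Proof.
move=> hs; apply: ge_ereal_sup => _ [X [finX _] <-].
rewrite fsbig_finite //= sumEFin lee_fin; apply: hs.
exact: finmap.fset_uniq.
Qed.


Lemma powR_le_self (t q : R) : 0 <= t <= 1 -> 1 <= q -> t `^ q <= t.
Proof.
move=> /andP[t0 t1] q1.
have [->|tn0] := eqVneq t 0.
  by rewrite powR0 // gt_eqF // (lt_le_trans ltr01 q1).
apply: ge1r_powR => //; rewrite t1 andbT lt_neqAle eq_sym tn0 t0.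
by [].
Qed.

Lemma pp_support (alpha : nat -> A) (a : A) :
  pp_map R alpha a != 0 -> exists k, alpha k = a.
Proof.
apply: contraNP => nE; apply/eqP.
have e : Sp alpha a = fun _ => 0.
  apply: funext => n; rewrite /Sp big1 // => k /eqP ka.
  by exfalso; apply: nE; exists k.
have h := S_cvg alpha a; rewrite e in h.
by rewrite -(cvg_lim (@Rhausdorff R) h) lim_cst //; exact: Rhausdorff.
Qed.

Lemma diff_bound (alpha beta : nat -> A) (N : nat) (a : A) n :
  (forall k, (k < N)%N -> alpha k = beta k) ->
  `|Sp alpha a n - Sp beta a n| <=
    \sum_(0 <= k < n | alpha k == a) (if (N <= k)%N then w k else 0) +
    \sum_(0 <= k < n | beta k == a) (if (N <= k)%N then w k else 0).
Proof.
move=> agree.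
have mk : forall (c : nat -> A) (f : nat -> R), \sum_(0 <= k < n | c k == a) f k = \sum_(0 <= k < n) (if c k == a then f k else 0).
  by move=> c f; rewrite big_mkcond.
rewrite /Sp !mk -sumrB.
apply: le_trans (ler_norm_sum _ _ _) _.
apply: le_trans (_ : _ <= \sum_(0 <= k < n) ((if alpha k == a then (if (N <= k)%N then w k else 0) else 0) + (if beta k == a then (if (N <= k)%N then w k else 0) else 0))) _; last by rewrite big_split.
apply: ler_sum => k _.
have hw := w_ge0 k.
case: (leqP N k) => Nk.
  by case: ifP => _; case: ifP => _; rewrite ?subrr ?subr0 ?sub0r ?normrN ?normr0 ?addr0 ?add0r ?(ger0_norm hw) //; lra.
rewrite (agree k Nk) subrr normr0.
by case: ifP; rewrite addr0.
Qed.

Lemma gen01 (x y : R) : 0 <= x -> x <= 1 -> 0 <= y -> y <= 1 -> -1 <= x - y <= 1.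
Proof. by move=> *; apply/andP; split; lra. Qed.

End Helpers.

Theorem proposition3p2 (R : realType) (A : choiceType) (z : A) (p : R) :
  infinite_set [set: A] -> 1 <= p ->
  (forall alpha : nat -> A, in_lp z p (pp_map R alpha)) /\
  (forall alpha : nat -> A, forall eps : R, 0 < eps ->
     exists2 delta : R, 0 < delta &
       forall beta : nat -> A, dN R alpha beta < delta ->
         d_p z p (pp_map R alpha) (pp_map R beta) < eps).
Proof.
move=> _ p1.
have p0 : 0 < p by apply: lt_le_trans ltr01 p1.
split.
  move=> alpha; split.
    apply: (sub_countable (subset_card_le (B := range alpha) _)).
      by move=> a [_ /pp_support [k <-]]; exists k.
    exact: card_le_trans (card_image_le alpha setT) (countableP _).
  rewrite /lp_sum.
  apply: le_lt_trans (@esum_le R A _ (fun a => `|pp_map R alpha a - 0| `^ p) 1 _) _; last by rewrite ltry.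
  move=> s us.
  apply: le_trans (_ : \sum_(a <- s) pp_map R alpha a <= 1).
    apply: ler_sum => a _; rewrite subr0 ger0_norm ?pp_ge0 //.
    by apply: powR_le_self => //; rewrite pp_ge0 pp_le1.
  apply: (@lim_sum_le R A s (Sp alpha) (pp_map R alpha)).
    by move=> a; exact: S_cvg.
  move=> n; apply: le_trans (@count_bound R A s alpha w n us (@w_ge0 R)) _.
  exact: sum_w_le1.
move=> alpha eps eps0.
set t := eps `^ p.
have t0 : 0 < t by apply: powR_gt0.
set M := (Num.Def.trunc (2 / t)).+1.
have HM : 2 * (2:R) ^- M < t.
  have h1 := truncnS_gt (2 / t).
  have h2 : (M%:R : R) < 2 ^+ M.
    by rewrite -natrX ltr_nat; apply: ltn_expl.
  have h3 : 2 / t < 2 ^+ M by apply: lt_trans h1 h2.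
  rewrite ltr_pdivrMr // in h3.
  by rewrite ltr_pdivrMr ?exprn_gt0 // mulrC.
exists (M.+1%:R^-1); first by rewrite invr_gt0 ltr0n.
move=> beta hd.
have agree : forall k, (k < M)%N -> alpha k = beta k.
  move: hd; rewrite /dN; case: pselect => [H hd|nH hd] k kM.
    move: hd; case: ex_minnP => m Pm minm hd.
    rewrite ltf_pV2 ?posrE ?ltr0n // ltr_nat in hd.
    case: (pselect (alpha k = beta k)) => // ne.
    have := minm k (asboolT ne).
    by rewrite leqNgt (leq_trans kM (ltnW hd)).
  case: (pselect (alpha k = beta k)) => // ne.
  by exfalso; apply: nH; exists k.
have key : forall s : seq A, uniq s ->
    \sum_(a <- s) `|pp_map R alpha a - pp_map R beta a| <= 2 * (2:R) ^- M.
  move=> s us.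
  apply: (@lim_sum_le R A s (fun a n => `|Sp alpha a n - Sp beta a n|)).
    by move=> a; apply: cvg_norm; apply: cvgB; exact: S_cvg.
  move=> n.
  set c := fun k => if (M <= k)%N then @w R k else 0.
  have c0 : forall k, 0 <= c k by move=> k; rewrite /c; case: ifP => _ //; exact: w_ge0.
  apply: le_trans (_ : \sum_(a <- s) (\sum_(0 <= k < n | alpha k == a) c k +
      \sum_(0 <= k < n | beta k == a) c k) <= _).
    by apply: ler_sum => a _; exact: diff_bound.
  rewrite big_split /=.
  apply: le_trans (lerD (@count_bound R A s alpha c n us c0) (@count_bound R A s beta c n us c0)) _.
  have h := @tail_le R M n; rewrite -/c in h.
  apply: le_trans (lerD h h) _.
  by rewrite ?mulr1 mulr_natl mulr2n.
have hE : (lp_sum z p (pp_map R alpha) (pp_map R beta) <= (2 * (2:R) ^- M)%:E)%E.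
  apply: esum_le => s us.
  apply: le_trans (key s us); apply: ler_sum => a _.
  apply: powR_le_self => //; rewrite normr_ge0 /=.
  by rewrite ler_norml; apply: gen01; rewrite ?pp_ge0 ?pp_le1.
have E0 : (0 <= lp_sum z p (pp_map R alpha) (pp_map R beta))%E.
  by apply: esum_ge0 => a _; rewrite lee_fin powR_ge0.
rewrite /d_p; move: hE E0.
case: (lp_sum z p (pp_map R alpha) (pp_map R beta)) => [r| |] //= hr r0.
rewrite lee_fin in hr r0.
have rt : r < t by apply: le_lt_trans hr HM.
have -> : eps = t `^ p^-1.
  rewrite /t -powRrM mulfV ?gt_eqF // powRr1 //; exact: ltW.
apply: gt0_ltr_powR; rewrite ?invr_gt0 ?nnegrE //; exact: ltW.
Qed.
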